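(* Let $X$ be a topological space and let $U$ be an ultrafilter on $\omega$. If $\varphi:Y_U\rightarrow \mathcal{F}(X)$ is lower semicontinuous and $\sup_{n<\omega}|\varphi(n)|<\omega$, then $\varphi$ has a continuous selection, i.e., there is a continuous $s:Y_U\rightarrow X$ with $s(y)\in\varphi(y)$ for all $y\in Y_U$.
   Context: $\mathcal{F}(X)$ denotes the set of nonempty closed subsets of $X$. A map $\varphi:Y\rightarrow\mathcal{F}(X)$ is lower semicontinuous if for every open $W\subseteq X$ the set $\{y\in Y:\varphi(y)\cap W\neq\emptyset\}$ is open in $Y$. For a filter $F$ on $\omega$, $Y_F$ is the space with underlying set $\omega\cup\{\infty\}$ in which each point of $\omega$ is isolated and the neighborhoods of $\infty$ are the sets $A\cup\{\infty\}$ with $A\in F$. *)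

(* Defs.v *)
From HB Require Import structures.
From mathcomp Require Import all_boot all_order all_algebra.
From mathcomp Require Import all_classical all_reals all_analysis.
Set Implicit Arguments. Unset Strict Implicit. Unset Printing Implicit Defensive.
Local Open Scope classical_set_scope.

(* The space Y_F: underlying set omega + {infinity}, modelled as [option nat]
   with [Some n] = n and [None] = infinity.  Points of omega are isolated and
   the neighbourhoods of infinity are the sets A \cup {infinity} with A in F. *)
Definition YF_open (F : set_system nat) (W : set (option nat)) : Prop :=
  W None -> F [set n | W (Some n)].

Definition YF_continuous (F : set_system nat) (X : topologicalType)
  (s : option nat -> X) : Prop :=
  forall V : set X, open V -> YF_open F (s @^-1` V).

Definition YF_FX (X : topologicalType) (phi : option nat -> set X) : Prop :=
  forall y, phi y !=set0 /\ closed (phi y).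

Definition YF_lsc (F : set_system nat) (X : topologicalType)
  (phi : option nat -> set X) : Prop :=
  forall W : set X, open W -> YF_open F [set y | phi y `&` W !=set0].

(* Main.v *)
Require Import Defs.
From HB Require Import structures.
From mathcomp Require Import all_boot all_order all_algebra.
From mathcomp Require Import all_classical all_reals all_analysis.
Local Open Scope classical_set_scope.
Local Open Scope card_scope.

Theorem mainTheorem1 (X : topologicalType) (U : set_system nat)
  (UU : UltraFilter U) (phi : option nat -> set X) :
  YF_FX phi -> YF_lsc U phi ->
  (exists N : nat, forall n : nat, phi (Some n) #<= `I_N) ->
  exists s : option nat -> X, YF_continuous U s /\ forall y, phi y (s y).
Proof.
move=> FX lsc [N HN].
have Hh : forall n, exists h : nat -> X, (forall i, phi (Some n) (h i)) /\
    (forall x, phi (Some n) x -> exists2 i, (i < N)%N & h i = x).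
  move=> n; have [d phid] := (FX (Some n)).1.
  have /ocard_geP[g] := HN n.
  exists (fun i => match g i with
                   | Some x => if pselect (phi (Some n) x) then x else d
                   | None => d end).
  split.
    by move=> i; case: (g i) => [x|] //; case: pselect.
  move=> x px.
  have [i Ii gi] : exists2 i, `I_N i & g i = Some x.
    by apply: (surj (f:=g)); exists x.
  by exists i => //; rewrite gi; case: pselect.
have [h Hh'] := choice Hh.
have [p pp] := (FX None).1.
have [i [iN Hi]] : exists i, (i < N)%N /\
    forall V, open V -> V p -> U [set n | V (h n i)].
  case: (pselect (exists i, (i < N)%N /\
    forall V, open V -> V p -> U [set n | V (h n i)])) => // nE.
  have nE' : forall i, (i < N)%N -> exists V, open V /\ V p /\
      U [set n | ~ V (h n i)].
    move=> i iN; apply: contrapT => nV; apply: nE.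
    exists i; split => // V oV Vp.
    have [//|Uc] := in_ultra_setVsetC [set n | V (h n i)] UU.
    by exfalso; apply: nV; exists V; split.
  have Ind : forall k, (k <= N)%N -> exists W, open W /\ W p /\
      U [set n | forall i, (i < k)%N -> ~ W (h n i)].
    elim=> [_|k IH kN].
      exists setT; split; first exact: openT.
      by split=> //; apply: filterS filterT => n _ i.
    have [W [oW [Wp UW]]] := IH (ltnW kN).
    have [V [oV [Vp UV]]] := nE' k kN.
    exists (W `&` V); split; first exact: openI.
    split; first by split.
    apply: filterS (filterI UW UV) => n [H1 H2] j.
    rewrite ltnS leq_eqVlt => /orP[/eqP->|jk] [Wx Vx].
      exact: H2.
    exact: (H1 j jk).
  have [W [oW [Wp UW]]] := Ind N (leqnn N).
  have L := lsc W oW (ex_intro _ p (conj pp Wp)).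
  exfalso; apply: (filter_not_empty U).
  apply: filterS (filterI L UW) => n [[x [px Wx]] H].
  have [j jN hx] := (Hh' n).2 x px.
  by apply: (H j jN); rewrite hx.
exists (fun y => match y with Some n => h n i | None => p end); split.
  by move=> V oV /= Vp; exact: (Hi V oV Vp).
by case=> [n|] //=; apply: (Hh' n).1.
Qed.
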